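(* For every integer $r\geq 3$ and every positive integer $n$, every collection of $n$ matchings, each of size $\lceil \frac{(r+1)n}{2}\rceil$, in an $r$-uniform hypergraph contains a rainbow matching of size at least $n-2^r\sqrt{n}$.
   Context: A hypergraph is $r$-uniform if every edge contains exactly $r$ vertices. A matching is a set of pairwise vertex-disjoint edges. Given a collection (repetitions allowed) of matchings $M_1,\dots,M_n$ in a hypergraph, a matching $M\subseteq \bigcup_{i=1}^n M_i$ is rainbow if there is an injection $\phi:M\to[n]$ such that every edge $e\in M$ belongs to $M_{\phi(e)}$. *)

(* Defs.v *)
From mathcomp Require Import all_boot.
From Stdlib Require Import Reals.
Set Implicit Arguments. Unset Strict Implicit. Unset Printing Implicit Defensive.

Definition uniform (V : finType) (r : nat) (H : {set {set V}}) : Prop :=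
  forall e, e \in H -> #|e| = r.

Definition matching (V : finType) (M : {set {set V}}) : Prop :=
  forall e f, e \in M -> f \in M -> e != f -> [disjoint e & f].

Definition rainbow (V : finType) (n : nat) (Ms : 'I_n -> {set {set V}})
    (M : {set {set V}}) : Prop :=
  matching M /\
  M \subset \bigcup_(i < n) Ms i /\
  exists phi : {set V} -> 'I_n,
    {in M &, injective phi} /\ (forall e, e \in M -> e \in Ms (phi e)).

Definition ceil_half (a : nat) : nat := (a.+1 %/ 2)%N.

(* Main.v *)
Require Import Defs.
From mathcomp Require Import all_boot.
From Stdlib Require Import Reals.
From mathcomp Require all_order all_algebra.
From mathcomp Require Import zify.
From Stdlib Require Import Classical Lra.
Set Implicit Arguments. Unset Strict Implicit. Unset Printing Implicit Defensive.

Module Bol.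
Import all_order all_algebra.
Import Order.TTheory GRing.Theory Num.Theory.
Definition bw (a b : nat) : rat := ((('C(a + b, a))%:R)^-1)%R.

Lemma bw_le1 a b : (bw a b <= 1)%R.
Proof.
rewrite /bw invf_le1; last by rewrite ltr0n bin_gt0 leq_addr.
by rewrite ler1n bin_gt0 leq_addr.
Qed.

Lemma bw_step a b : (b.+1%:R * bw a b = (a + b.+1)%:R * bw a b.+1)%R.
Proof.
rewrite /bw.
have h := mul_bin_down (a + b.+1) a.
rewrite addKn addnS /= -addnS in h.
have n1 : (('C(a + b, a)%:R)%R : rat) != 0%R by rewrite pnatr_eq0 -lt0n bin_gt0 leq_addr.
have n2 : (('C(a + b.+1, a)%:R)%R : rat) != 0%R by rewrite pnatr_eq0 -lt0n bin_gt0 leq_addr.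
apply/eqP; rewrite eqr_div //; apply/eqP.
by rewrite -!natrM h.
Qed.

Lemma bw_sum a b N : a + b <= N -> 0 < b ->
  (bw a b.-1 *+ b + bw a b *+ (N - (a + b)) = N%:R * bw a b)%R.
Proof.
move=> le bp.
destruct b as [|b]; first by rewrite ltnn in bp.
change (b.+1.-1) with b.
rewrite -(mulr_natl (bw a b) b.+1) -(mulr_natl (bw a b.+1)).
rewrite bw_step natrB // -mulrDl; congr (_ * _)%R.
by rewrite addrC subrK.
Qed.

Lemma bol_empty (V I : finType) (A B : I -> {set V}) (J : {set I}) i0 :
  i0 \in J -> B i0 = set0 ->
  (forall i j, i \in J -> j \in J -> i != j -> ~~ [disjoint A i & B j]) ->
  (\sum_(i in J) bw #|A i| #|B i| <= 1)%R.
Proof.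
move=> iJ B0 hc.
rewrite (big_setD1 i0) //= big1 ?addr0 ?bw_le1 // => i /setD1P [ne iJ'].
exfalso; move: (hc i i0 iJ' iJ ne); by rewrite B0 -setI_eq0 setI0 eqxx.
Qed.

Lemma bollobas (V I : finType) (A : I -> {set V}) : forall s (X : {set V}) (J : {set I}) (B : I -> {set V}),
 #|X| = s ->
 (forall i, i \in J -> A i \subset X) -> (forall i, i \in J -> B i \subset X) ->
 (forall i, i \in J -> [disjoint A i & B i]) ->
 (forall i j, i \in J -> j \in J -> i != j -> ~~ [disjoint A i & B j]) ->
 (\sum_(i in J) bw #|A i| #|B i| <= 1)%R.
Proof.
elim => [|s IH] X J B hX hA hB hd hc.
  case: (set_0Vmem J) => [->|[i0 i0J]]; first by rewrite big_set0.
  apply: (bol_empty i0J) hc.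
  by apply/eqP; rewrite -subset0 -(cards0_eq hX) hB.
case: (boolP [exists i in J, B i == set0]).
  by case/exists_inP => i0 i0J /eqP B0; apply: (bol_empty i0J) hc.
rewrite negb_exists_in => /forall_inP hne.
pose g x i := bw #|A i| #|B i :\ x|.
have H1 : forall x, x \in X -> (\sum_(i in [set i in J | x \notin A i]) g x i <= 1)%R.
  move=> x xX; apply: (IH (X :\ x)).
  - by move: hX; rewrite (cardsD1 x) xX add1n => -[].
  - move=> i; rewrite inE => /andP [iJ xA]; by rewrite subsetD1 hA.
  - move=> i; rewrite inE => /andP [iJ xA]; exact: setSD (hB _ iJ).
  - move=> i; rewrite inE => /andP [iJ xA].
    exact: disjointWr (subsetDl _ _) (hd _ iJ).
  - move=> i j; rewrite !inE => /andP [iJ xA] /andP [jJ _] ne.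
    move: (hc _ _ iJ jJ ne); rewrite -!setI_eq0 => /set0Pn [y].
    rewrite inE => /andP [yA yB]; apply/set0Pn; exists y.
    rewrite !inE yA yB andbT.
    by apply/eqP => eyx; move: xA; rewrite -eyx yA.
have H2 : (\sum_(x in X) \sum_(i in [set i in J | x \notin A i]) g x i <= #|X|%:R)%R.
  rewrite -sumr_const; apply: ler_sum => x xX; exact: H1.
have H3 : forall i, i \in J -> (\sum_(x in X) (if x \notin A i then g x i else 0) = #|X|%:R * bw #|A i| #|B i|)%R.
  move=> i iJ.
  rewrite (bigID (mem (B i))) /=.
  have -> : (\sum_(x in X | x \in B i) (if x \notin A i then g x i else 0) = \sum_(x in B i) bw #|A i| #|B i|.-1)%R.
    apply: eq_big => x.
      by rewrite andb_idl // => xB; apply: (subsetP (hB _ iJ)).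
    move=> /andP [_ xB].
    have -> : x \notin A i.
      by apply/negP => xA; move: (hd _ iJ); rewrite -setI_eq0 => /eqP/setP/(_ x); rewrite !inE xA xB.
    by rewrite /g (cardsD1 x (B i)) xB.
  rewrite [E in (_ + E)%R](bigID (mem (A i))) /= [E in (_ + (E + _))%R]big1; last first.
    by move=> y /andP [] _ yA; rewrite yA.
  rewrite add0r [E in (_ + E)%R](eq_bigr (fun=> bw #|A i| #|B i|)); last first.
    move=> x /andP [/andP [_ xB] xA]; by rewrite xA /g (cardsD1 x (B i)) (negbTE xB) add0n.
  rewrite [E in (_ + E)%R](eq_bigl (mem (X :\: (A i :|: B i)))); last first.
    move=> x; rewrite /= !inE negb_or.
    by case: (x \in X); case: (x \in A i); case: (x \in B i).
  rewrite !sumr_const.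
  have dAB : #|A i :|: B i| = #|A i| + #|B i|.
    rewrite cardsU (_ : A i :&: B i = set0) ?cards0 ?subn0 //.
    by apply/eqP; rewrite setI_eq0 hd.
  have sAB : A i :|: B i \subset X by rewrite subUset hA ?hB.
  rewrite cardsDS // dAB.
  have le : #|A i| + #|B i| <= #|X| by rewrite -dAB subset_leq_card.
  have bpos : 0 < #|B i| by rewrite card_gt0 hne.
  move: le bpos; set a := #|A i|; set b := #|B i|; set N := #|X|.
  exact: bw_sum.
have H4 : (\sum_(x in X) \sum_(i in [set i in J | x \notin A i]) g x i = \sum_(i in J) #|X|%:R * bw #|A i| #|B i|)%R.
  rewrite (eq_bigr (fun x => \sum_(i in J) if x \notin A i then g x i else 0)%R); last first.
    move=> x _; rewrite -big_mkcondr /=; apply: eq_bigl => i; by rewrite inE.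
  rewrite exchange_big /=; apply: eq_bigr => i iJ; exact: H3.
move: H2; rewrite H4 -mulr_sumr -[E in (_ <= E)%R]mulr1 ler_pM2l //.
by rewrite hX ltr0n.
Qed.

Lemma bollobas_nat (V I : finType) (J : {set I}) (A B : I -> {set V}) r :
  (forall i, i \in J -> #|A i| = r) -> (forall i, i \in J -> #|B i| = r) ->
  (forall i, i \in J -> [disjoint A i & B i]) ->
  (forall i j, i \in J -> j \in J -> i != j -> ~~ [disjoint A i & B j]) ->
  #|J| <= 'C(r + r, r).
Proof.
move=> hA hB hd hc.
have := @bollobas V I A #|[set: V]| [set: V] J B erefl (fun i _ => subsetT _) (fun i _ => subsetT _) hd hc.
rewrite (eq_bigr (fun=> bw r r)); last by move=> i iJ; rewrite hA ?hB.
rewrite sumr_const -mulr_natl /bw ler_pdivrMr ?mul1r ?ler_nat //.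
by rewrite ltr0n bin_gt0 leq_addr.
Qed.
End Bol.

Lemma sum_bool_card (T : finType) (A : {pred T}) (P : pred T) :
  \sum_(x in A) (P x : nat) = #|[set x in A | P x]|.
Proof.
rewrite -sum1dep_card big_mkcondr /=; apply: eq_bigr => x _; by case: (P x).
Qed.

Lemma match_sum (V : finType) (M S : {set {set V}}) (X : {set V}) :
  matching M -> S \subset M -> \sum_(e in S) #|e :&: X| <= #|X|.
Proof.
move=> hM sSM.
have E : forall e : {set V}, #|e :&: X| = \sum_(v in X) (v \in e).
  move=> e; rewrite sum_bool_card; apply: eq_card => v; by rewrite !inE andbC.
rewrite (eq_bigr _ (fun e _ => E e)) exchange_big /= -[#|X|]sum1_card.
apply: leq_sum => v vX; rewrite sum_bool_card.
apply/card_le1_eqP => e f; rewrite !inE => /andP [eS ve] /andP [fS vf].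
apply/eqP; apply: contraTT isT => ne.
have := hM f e (subsetP sSM _ fS) (subsetP sSM _ eS) ne.
rewrite -setI_eq0 => /eqP/setP/(_ v); by rewrite !inE ve vf.
Qed.

Lemma counting (V : finType) (n r : nat) (Ms : 'I_n -> {set {set V}})
    (F : {set {set V}}) (D : {set 'I_n}) :
  2 <= r -> matching F -> (forall f, f \in F -> #|f| = r) ->
  (forall i, matching (Ms i)) -> (forall i e, e \in Ms i -> #|e| = r) ->
  (forall i, (r + 1) * n <= 2 * #|Ms i|) ->
  n <= #|D| + #|F| ->
  (forall i e, i \in D -> e \in Ms i -> e :&: cover F != set0) ->
  (forall f i j e1 e2, f \in F -> i \in D -> j \in D -> i != j ->
      e1 \in Ms i -> e2 \in Ms j ->
      e1 :&: cover F \subset f -> e2 :&: cover F \subset f -> ~~ [disjoint e1 & e2]) ->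
  (n - #|F|) * (n - #|F|) <= 'C(r + r, r) * #|F|.
Proof.
move=> r2 hF hFr hM hMr hMs hD hA hB.
set C := cover F; set k := #|F|.
have hC : #|C| <= r * k.
  apply: leq_trans (leq_card_cover F).1 _.
  by rewrite (eq_bigr (fun=> r)) // sum_nat_const mulnC.
pose P i := [set e in Ms i | #|e :&: C| == 1].
pose Q (i : 'I_n) (f : {set V}) := [set e in P i | ~~ [disjoint e & f]].
pose T i := [set f in F | 1 < #|Q i f|].
have S1 : forall i, i \in D -> (r + 1) * n <= #|P i| + r * k.
  move=> i iD; apply: leq_trans (hMs i) _.
  have h1 : 2 * #|Ms i| <= \sum_(e in Ms i) (#|e :&: C| + (#|e :&: C| == 1)).
    rewrite mulnC -sum_nat_const; apply: leq_sum => e eM.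
    have := hA i e iD eM; rewrite -card_gt0.
    by case: #|e :&: C| => [|[|m]].
  apply: leq_trans h1 _.
  rewrite big_split /= sum_bool_card addnC leq_add //.
  exact: leq_trans (match_sum _ (hM i) (subxx _)) hC.
have QP : forall i f e, e \in Q i f -> [/\ e \in Ms i, #|e :&: C| = 1 & ~~ [disjoint e & f]].
  by move=> i f e; rewrite !inE => /andP [/andP [-> /eqP ->] ->].
have S2 : forall i f, i \in D -> f \in F -> #|Q i f| <= r.
  move=> i f iD fF; rewrite -sum1_card -(hFr f fF).
  apply: leq_trans (match_sum _ (hM i) _).
    apply: leq_sum => e /QP [_ _]; by rewrite -setI_eq0 -card_gt0.
  by apply/subsetP => e /QP [].
have S3 : forall i, i \in D -> #|P i| <= \sum_(f in F) #|Q i f|.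
  move=> i iD.
  have E : forall f, #|Q i f| = \sum_(e in P i) (~~ [disjoint e & f] : nat).
    by move=> f; rewrite sum_bool_card.
  rewrite (eq_bigr _ (fun f _ => E f)).
  rewrite exchange_big /= -sum1_card; apply: leq_sum => e.
  rewrite inE => /andP [eM /eqP e1].
  have : 0 < #|e :&: C| by rewrite e1.
  rewrite card_gt0 => /set0Pn [v]; rewrite inE => /andP [ve].
  rewrite /C /cover => /bigcupP [f fF vf].
  rewrite (bigD1 f) //=.
  have -> : ~~ [disjoint e & f].
    rewrite -setI_eq0; apply/set0Pn; exists v; by rewrite inE ve.
  by [].
have S4 : forall i, i \in D -> \sum_(f in F) #|Q i f| <= k + (r - 1) * #|T i|.
  move=> i iD.
  rewrite /T -sum_bool_card /k -sum1_card big_distrr /= -big_split /=.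
  apply: leq_sum => f fF.
  have := S2 i f iD fF.
  case: (ltnP 1 #|Q i f|) => h /= hr.
    by apply: leq_trans hr _; rewrite muln1 add1n subn1 prednK // ltnW.
  by rewrite muln0 addn0.
have S5 : forall i, i \in D -> n - k <= #|T i|.
  move=> i iD.
  have := S1 i iD; have := S3 i iD; have := S4 i iD.
  nia.
have Qsub : forall i f e, f \in F -> e \in Q i f -> e :&: C \subset f.
  move=> i f e fF /QP [_ e1 nd].
  move: nd; rewrite -setI_eq0 => /set0Pn [v]; rewrite inE => /andP [ve vf].
  have vC : v \in e :&: C.
    by rewrite inE ve /C /cover; apply/bigcupP; exists f.
  apply/subsetP => w wC.
  have : #|e :&: C| <= 1 by rewrite e1.
  move/card_le1_eqP/(_ w v wC vC) => <-; exact: vf.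
have S6 : forall f, f \in F -> #|[set i in D | f \in T i]| <= 'C(r + r, r).
  move=> f fF.
  pose A i := odflt set0 [pick e in Q i f].
  pose B i := odflt set0 [pick e in Q i f :\ A i].
  have hAB : forall i, i \in [set i in D | f \in T i] -> A i \in Q i f /\ B i \in Q i f :\ A i.
    move=> i /setIdP [iD /setIdP [_ hq]].
    have hA' : A i \in Q i f.
      rewrite /A; case: (pickP [pred e | e \in Q i f]) => [e //|none].
      by move: hq; rewrite (eq_card0 none).
    split => //.
    rewrite /B; case: (pickP [pred e | e \in Q i f :\ A i]) => [e //|none].
    by move: hq; rewrite (cardsD1 (A i)) hA' (eq_card0 none).
  apply: (@Bol.bollobas_nat _ _ _ A B).
  - move=> i /hAB [/QP [eM _ _] _]; exact: hMr eM.
  - move=> i /hAB [_ /setD1P [_ /QP [eM _ _]]]; exact: hMr eM.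
  - move=> i iI; have [hA' /setD1P [ne hB']] := hAB i iI.
    move: hA' hB' => /QP [eA _ _] /QP [eB _ _].
    by apply: (hM i _ _ eA eB); rewrite eq_sym.
  - move=> i j iI jI ne.
    have [hA' _] := hAB i iI; have [_ /setD1P [_ hB']] := hAB j jI.
    move: iI jI; rewrite !inE => /andP [iD _] /andP [jD _].
    apply: hB fF iD jD ne _ _ (Qsub _ _ _ fF hA') (Qsub _ _ _ fF hB').
      by case/QP: hA'.
    by case/QP: hB'.
have S7 : (n - k) * (n - k) <= \sum_(i in D) #|T i|.
  apply: leq_trans (_ : #|D| * (n - k) <= _).
    by rewrite leq_mul2r; apply/orP; right; lia.
  rewrite -sum_nat_const; apply: leq_sum => i iD; exact: S5.
have S8 : \sum_(i in D) #|T i| <= 'C(r + r, r) * k.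
  have E : forall i, #|T i| = \sum_(f in F) (f \in T i : nat).
    move=> i; rewrite sum_bool_card; apply: eq_card => f.
    by rewrite !inE andbA andbb.
  rewrite (eq_bigr _ (fun i _ => E i)) exchange_big /= mulnC -sum_nat_const.
  apply: leq_sum => f fF; rewrite sum_bool_card; exact: S6.
exact: leq_trans S7 S8.
Qed.

Definition rb (V : finType) n (Ms : 'I_n -> {set {set V}}) (F : {set {set V}})
  (phi : {set V} -> 'I_n) :=
  matching F /\ {in F &, injective phi} /\ (forall e, e \in F -> e \in Ms (phi e)).

Lemma rb_rainbow (V : finType) n (Ms : 'I_n -> {set {set V}}) F phi :
  rb Ms F phi -> rainbow Ms F.
Proof.
move=> [hm [hi hin]]; split => //; split.
  apply/subsetP => e eF; apply/bigcupP; exists (phi e) => //; exact: hin.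
by exists phi.
Qed.

Lemma rb_card (V : finType) n (Ms : 'I_n -> {set {set V}}) F phi :
  rb Ms F phi -> #|F| <= n.
Proof.
move=> [_ [hi _]]; rewrite -(card_in_imset hi).
by apply: leq_trans (max_card _) _; rewrite card_ord.
Qed.

Lemma rb_sub (V : finType) n (Ms : 'I_n -> {set {set V}}) (F G : {set {set V}}) phi :
  rb Ms F phi -> G \subset F -> rb Ms G phi.
Proof.
move=> [hm [hi hin]] sGF; split; last split.
- move=> e f eG fG; apply: hm; exact: (subsetP sGF).
- move=> e f eG fG; apply: hi; exact: (subsetP sGF).
- move=> e eG; apply: hin; exact: (subsetP sGF).
Qed.

Lemma rb_add (V : finType) n (Ms : 'I_n -> {set {set V}}) F phi i e :
  rb Ms F phi -> e \in Ms i -> (forall g, g \in F -> phi g != i) ->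
  (forall g, g \in F -> [disjoint e & g]) -> e != set0 ->
  rb Ms (e |: F) (fun x => if x == e then i else phi x) /\ #|e |: F| = #|F|.+1.
Proof.
move=> [hm [hi hin]] eM hu hd ne.
have eF : e \notin F.
  apply/negP => eF; move: (hd e eF); rewrite -setI_eq0 setIid; exact/negP.
split; last by rewrite cardsU1 eF.
split; last split.
- move=> x y /setU1P [-> | xF] /setU1P [-> | yF] nxy.
  + by rewrite eqxx in nxy.
  + exact: hd.
  + by rewrite disjoint_sym; apply: hd.
  + exact: hm.
- move=> x y /setU1P [-> | xF] /setU1P [-> | yF]; rewrite ?eqxx //.
  + have -> : (y == e) = false by apply/negP => /eqP ye; move: eF; rewrite -ye yF.
    by move=> E; move: (hu y yF); rewrite -E eqxx.
  + have -> : (x == e) = false by apply/negP => /eqP xe; move: eF; rewrite -xe xF.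
    by move=> E; move: (hu x xF); rewrite E eqxx.
  + have -> : (x == e) = false by apply/negP => /eqP xe; move: eF; rewrite -xe xF.
    have -> : (y == e) = false by apply/negP => /eqP ye; move: eF; rewrite -ye yF.
    exact: hi.
- move=> x /setU1P [-> | xF]; first by rewrite eqxx.
  have -> : (x == e) = false by apply/negP => /eqP xe; move: eF; rewrite -xe xF.
  exact: hin.
Qed.

Lemma outside (V : finType) (F : {set {set V}}) f g e :
  matching F -> f \in F -> g \in F :\ f -> e :&: cover F \subset f -> [disjoint e & g].
Proof.
move=> hm fF /setD1P [gf gF] sub.
rewrite -setI_eq0; apply/eqP/setP => v; rewrite !inE; apply/negP => /andP [ve vg].
have vf : v \in f.
  apply: (subsetP sub); rewrite inE ve; apply/bigcupP; by exists g.
move: (hm g f gF fF gf); rewrite -setI_eq0 => /eqP/setP/(_ v); by rewrite !inE vg vf.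
Qed.

Lemma augment (V : finType) r n (Ms : 'I_n -> {set {set V}}) F phi :
  2 <= r -> (forall i e, e \in Ms i -> #|e| = r) -> (forall i, matching (Ms i)) ->
  (forall i, (r + 1) * n <= 2 * #|Ms i|) -> rb Ms F phi ->
  'C(r + r, r) * #|F| < (n - #|F|) * (n - #|F|) ->
  exists F' phi', rb Ms F' phi' /\ #|F| < #|F'|.
Proof.
move=> r2 hMr hM hMs hrb hlt.
apply: NNPP => Hno.
have [hm [hi hin]] := hrb.
set D := ~: (phi @: F).
have hu : forall i g, i \in D -> g \in F -> phi g != i.
  move=> i g; rewrite inE => iD gF; apply/eqP => E; move: iD; by rewrite -E imset_f.
have ne0 : forall i e, e \in Ms i -> e != set0.
  move=> i e eM; rewrite -card_gt0 (hMr _ _ eM); lia.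
have hD : n <= #|D| + #|F|.
  have := cardsC (phi @: F); rewrite card_ord (card_in_imset hi).
  have := rb_card hrb; rewrite /D; lia.
have hA : forall i e, i \in D -> e \in Ms i -> e :&: cover F != set0.
  move=> i e iD eM; apply/negP => /eqP h0; apply: Hno.
  have dj : forall g, g \in F -> [disjoint e & g].
    move=> g gF; rewrite -setI_eq0 -subset0 -h0; apply/subsetP => v.
    rewrite !inE => /andP [ve vg]; rewrite ve; apply/bigcupP; by exists g.
  have [rb' c'] := rb_add hrb eM (fun g gF => hu i g iD gF) dj (ne0 _ _ eM).
  by exists (e |: F), (fun x => if x == e then i else phi x); rewrite c'.
have hB : forall f i j e1 e2, f \in F -> i \in D -> j \in D -> i != j ->
      e1 \in Ms i -> e2 \in Ms j ->
      e1 :&: cover F \subset f -> e2 :&: cover F \subset f -> ~~ [disjoint e1 & e2].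
  move=> f i j e1 e2 fF iD jD ij e1M e2M s1 s2; apply/negP => dj; apply: Hno.
  have rbG := rb_sub hrb (subD1set F f).
  have [rb2 c2] := rb_add rbG e2M (fun g gG => hu j g jD (subsetP (subD1set F f) _ gG))
     (fun g gG => outside hm fF gG s2) (ne0 _ _ e2M).
  have u3 : forall g, g \in e2 |: (F :\ f) -> (if g == e2 then j else phi g) != i.
    move=> g /setU1P [-> | gG]; first by rewrite eqxx eq_sym.
    case: (g == e2); first by rewrite eq_sym.
    exact: hu i g iD (subsetP (subD1set F f) _ gG).
  have d3 : forall g, g \in e2 |: (F :\ f) -> [disjoint e1 & g].
    move=> g /setU1P [-> // | gG]; exact: outside hm fF gG s1.
  have [rb3 c3] := rb_add rb2 e1M u3 d3 (ne0 _ _ e1M).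
  exists (e1 |: (e2 |: (F :\ f))), (fun x => if x == e1 then i else if x == e2 then j else phi x).
  split => //; rewrite c3 c2 (cardsD1 f F) fF; lia.
have := counting r2 hm (fun f fF => hMr _ _ (hin f fF)) hM hMr hMs hD hA hB.
rewrite leqNgt; by rewrite hlt.
Qed.

Lemma bin_le4 r : 'C(r + r, r) <= expn 4 r.
Proof.
have := expnDn 1 1 (r + r).
have hr : r < (r + r).+1 by rewrite ltnS leq_addr.
rewrite (bigD1 (Ordinal hr)) //= !exp1n muln1 => E.
have : 'C(r + r, r) <= expn (1 + 1) (r + r) by rewrite E muln1 leq_addr.
by rewrite expnD -expnMn.
Qed.

Lemma INR_expn m k : INR (expn m k) = (INR m ^ k)%R.
Proof.
elim: k => [|k IH]; first by rewrite expn0.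
by rewrite expnS mulnE mult_INR IH.
Qed.

Lemma real_bound (n r k : nat) :
  (n - k) * (n - k) <= expn 4 r * n -> (INR n - 2 ^ r * sqrt (INR n) <= INR k)%R.
Proof.
move=> h.
have X0 : (0 <= 2 ^ r)%R by apply: pow_le; lra.
have s0 := sqrt_pos (INR n).
have ss : (sqrt (INR n) * sqrt (INR n) = INR n)%R by apply: sqrt_sqrt; apply: pos_INR.
case: (leqP n k) => nk.
  have : (INR n <= INR k)%R by apply: le_INR; apply/leP.
  have : (0 <= 2 ^ r * sqrt (INR n))%R by apply: Rmult_le_pos.
  lra.
have hR : (INR (n - k) * INR (n - k) <= INR (expn 4 r) * INR n)%R.
  rewrite -!mult_INR; apply: le_INR; apply/leP; by rewrite -!mulnE.
rewrite minus_INR in hR; last by apply/leP; apply: ltnW.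
rewrite INR_expn (_ : INR 4 = 2 * 2)%R in hR; last by simpl; lra.
rewrite Rpow_mult_distr in hR.
set X := (2 ^ r)%R in X0 hR *; set s := sqrt (INR n) in s0 ss *.
rewrite -ss in hR.
apply: Rnot_lt_le => hlt.
have hd : (X * s < INR n - INR k)%R by lra.
have : (X * s * (X * s) < (INR n - INR k) * (INR n - INR k))%R.
  apply: Rmult_le_0_lt_compat => //; apply: Rmult_le_pos => //.
nra.
Qed.

Theorem lemma2p6 (r n : nat) (V : finType) (H : {set {set V}})
    (Ms : 'I_n -> {set {set V}}) :
  (3 <= r)%N -> (0 < n)%N ->
  uniform r H ->
  (forall i, Ms i \subset H) ->
  (forall i, matching (Ms i)) ->
  (forall i, #|Ms i| = ceil_half ((r + 1) * n)) ->
  exists M : {set {set V}},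
    rainbow Ms M /\
    (INR n - 2 ^ r * sqrt (INR n) <= INR #|M|)%R.
Proof.
move=> r3 n0 hU hsub hM hsz.
have r2 : 2 <= r by apply: ltnW.
have hMr : forall i e, e \in Ms i -> #|e| = r.
  move=> i e eM; apply: hU; exact: (subsetP (hsub i)).
have hMs : forall i, (r + 1) * n <= 2 * #|Ms i|.
  move=> i; rewrite hsz /ceil_half.
  have := divn_eq ((r + 1) * n).+1 2.
  have := ltn_pmod ((r + 1) * n).+1 (isT : 0 < 2).
  lia.
have key : forall t F phi, rb Ms F phi -> n <= #|F| + t ->
    exists M : {set {set V}}, rainbow Ms M /\ (INR n - 2 ^ r * sqrt (INR n) <= INR #|M|)%R.
  elim => [|t IH] F phi hrb ht.
    exists F; split; first exact: rb_rainbow hrb.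
    apply: real_bound.
    have -> : n - #|F| = 0 by lia.
    by [].
  case: (leqP ((n - #|F|) * (n - #|F|)) (expn 4 r * n)) => hle.
    exists F; split; first exact: rb_rainbow hrb.
    exact: real_bound.
  have hlt : 'C(r + r, r) * #|F| < (n - #|F|) * (n - #|F|).
    apply: leq_ltn_trans hle.
    apply: leq_mul; first exact: bin_le4.
    exact: rb_card hrb.
  have [F' [phi' [hrb' hc]]] := augment r2 hMr hM hMs hrb hlt.
  apply: (IH F' phi' hrb'); lia.
case: n Ms hsz hM hsub hMs hMr n0 key => [//|n'] Ms hsz hM hsub hMs hMr _ key.
apply: (key n'.+1 set0 (fun _ => ord0)).
  split; last split.
  - by move=> e f; rewrite in_set0.
  - by move=> e f; rewrite in_set0.
  - by move=> e; rewrite in_set0.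
by rewrite cards0.
Qed.
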